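(* Let $P$ be a natural unit interval order. Then $\mathbb{Q}(t)\otimes I^P_{\mathrm{plac}}\subseteq I^P_T$.
   Context: Write $a<_Pb$ for strict order in the poset $P$ and $a\sim_Pb$ for incomparable or equal. A natural unit interval order is a finite poset $P$ together with a total order $<$ on its underlying set such that (i) $a<_Pb$ implies $a<b$, and (ii) whenever $a\sim_Pb$, $b\sim_Pc$, $a<_Pc$ (with $a,b,c$ distinct), one has $a<b<c$. $\mathcal{U}_P=\mathbb{Z}\langle u_a:a\in P\rangle$. $I^P_{\mathrm{plac}}$ is the two-sided ideal of $\mathcal{U}_P$ generated by: $u_bu_au_c-u_bu_cu_a$ when $a<_Pb$, $c\not<_Pb$, $a<_Pc$; $u_cu_au_b-u_au_cu_b$ when $b\not<_Pa$, $b<_Pc$, $a<_Pc$; $u_cu_au_b-u_bu_cu_a$ when $a\sim_Pb$, $b\sim_Pc$, $a<_Pc$. $I^P_T$ is the two-sided ideal of $\mathbb{Q}(t)\otimes_{\mathbb{Z}}\mathcal{U}_P$ generated by $u_cu_a-u_au_c$ for $a<_Pc$, and $u_bu_a-t\,u_au_b$ for $a<b$ with $a\sim_Pb$. *)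

(* Defs.v *)
From HB Require Import structures.
From mathcomp Require Import all_boot all_order all_algebra fraction.
Set Implicit Arguments. Unset Strict Implicit. Unset Printing Implicit Defensive.
Import Order.TTheory GRing.Theory Num.Theory.
Local Open Scope ring_scope.

(* Noncommutative polynomials R<u_x : x in T>, represented by their coefficient
   function on words (finite support is automatic for all elements we build). *)
Definition ncp (R : comPzRingType) (T : Type) := seq T -> R.

Section NC.
Variables (R : comPzRingType) (T : eqType).

Definition ncword (w : seq T) : ncp R T := fun v => (v == w)%:R.

Definition ncmul (f g : ncp R T) : ncp R T :=
  fun w => \sum_(i < (size w).+1) f (take i w) * g (drop i w).

Definition ncsub (f g : ncp R T) : ncp R T := fun w => f w - g w.
Definition ncscale (c : R) (f : ncp R T) : ncp R T := fun w => c * f w.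

Definition in_ideal (G : ncp R T -> Prop) (f : ncp R T) : Prop :=
  exists (m : nat) (c : 'I_m -> R) (a b : 'I_m -> seq T) (g : 'I_m -> ncp R T),
    (forall i, G (g i)) /\
    forall w, f w = \sum_(i < m) c i * ncmul (ncmul (ncword (a i)) (g i)) (ncword (b i)) w.
End NC.

(* Natural unit interval orders on the totally ordered set 'I_n
   (the total order < being the usual order of ordinals). *)
Definition incP n (ltP : rel 'I_n) (a b : 'I_n) : bool := ~~ ltP a b && ~~ ltP b a.

Definition is_NUIO n (ltP : rel 'I_n) : Prop :=
  [/\ irreflexive ltP, transitive ltP,
      (forall a b, ltP a b -> (a < b)%N) &
      (forall a b c, a != b -> b != c -> a != c ->
         incP ltP a b -> incP ltP b c -> ltP a c -> (a < b < c)%N)].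

Definition plac_gens n (ltP : rel 'I_n) (f : ncp int 'I_n) : Prop :=
  exists a b c : 'I_n,
    [\/ [/\ ltP a b, ~~ ltP c b, ltP a c &
          f =1 ncsub (ncword int [:: b; a; c]) (ncword int [:: b; c; a])],
        [/\ ~~ ltP b a, ltP b c, ltP a c &
          f =1 ncsub (ncword int [:: c; a; b]) (ncword int [:: a; c; b])] |
        [/\ incP ltP a b, incP ltP b c, ltP a c &
          f =1 ncsub (ncword int [:: c; a; b]) (ncword int [:: b; c; a])]].

Definition Qt := {fraction {poly rat}}.
Definition tQ : Qt := @tofrac _ ('X : {poly rat}).

Definition T_gens n (ltP : rel 'I_n) (f : ncp Qt 'I_n) : Prop :=
  (exists a c : 'I_n, ltP a c /\
     f =1 ncsub (ncword Qt [:: c; a]) (ncword Qt [:: a; c])) \/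
  (exists a b : 'I_n, [/\ (a < b)%N, incP ltP a b &
     f =1 ncsub (ncword Qt [:: b; a]) (ncscale tQ (ncword Qt [:: a; b]))]).

(* Q(t) (x)_Z I^P_plac, viewed inside Q(t) (x)_Z U_P = Q(t)<u>:
   the Q(t)-span of the images of elements of I^P_plac. *)
Definition in_Qt_tensor_plac n (ltP : rel 'I_n) (f : ncp Qt 'I_n) : Prop :=
  exists (m : nat) (c : 'I_m -> Qt) (h : 'I_m -> ncp int 'I_n),
    (forall i, in_ideal (plac_gens ltP) (h i)) /\
    forall w, f w = \sum_(i < m) c i * (h i w)%:~R.

(* Main.v *)
Require Import Defs.
From HB Require Import structures.
From mathcomp Require Import all_boot all_order all_algebra fraction.
From mathcomp Require Import ring.
Set Implicit Arguments. Unset Strict Implicit. Unset Printing Implicit Defensive.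
Import Order.TTheory GRing.Theory Num.Theory.
Local Open Scope ring_scope.

Section Aux.
Variables (R : comPzRingType) (T : eqType).

Definition Lm (a : seq T) (g : ncp R T) : ncp R T :=
  fun w => if take (size a) w == a then g (drop (size a) w) else 0.
Definition Rm (b : seq T) (g : ncp R T) : ncp R T :=
  fun w => if drop (size w - size b) w == b then g (take (size w - size b) w) else 0.

Lemma prefP (a w : seq T) : reflect (exists v, w = a ++ v) (take (size a) w == a).
Proof.
apply: (iffP eqP) => [E|[v ->]].
  by exists (drop (size a) w); rewrite -{1}(cat_take_drop (size a) w) E.
by rewrite take_size_cat.
Qed.

Lemma sufP (b w : seq T) : reflect (exists u, w = u ++ b) (drop (size w - size b) w == b).
Proof.
apply: (iffP eqP) => [E|[u ->]].
  by exists (take (size w - size b) w); rewrite -{1}(cat_take_drop (size w - size b) w) E.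
by rewrite size_cat addnK drop_size_cat.
Qed.

Lemma Lm_cat a g v : Lm a g (a ++ v) = g v.
Proof. by rewrite /Lm take_size_cat // eqxx drop_size_cat. Qed.
Lemma Lm_0 a g w : ~ (exists v, w = a ++ v) -> Lm a g w = 0.
Proof. by rewrite /Lm; case: prefP. Qed.
Lemma Rm_cat b g u : Rm b g (u ++ b) = g u.
Proof. by rewrite /Rm size_cat addnK drop_size_cat // eqxx take_size_cat. Qed.
Lemma Rm_0 b g w : ~ (exists u, w = u ++ b) -> Rm b g w = 0.
Proof. by rewrite /Rm; case: sufP. Qed.

Lemma Lm_ext a f g : f =1 g -> Lm a f =1 Lm a g.
Proof. by move=> e w; rewrite /Lm e. Qed.
Lemma Rm_ext b f g : f =1 g -> Rm b f =1 Rm b g.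
Proof. by move=> e w; rewrite /Rm e. Qed.

Lemma catK (a x y : seq T) : a ++ x = a ++ y -> x = y.
Proof. by move/eqP; rewrite eqseq_cat // => /andP[_ /eqP]. Qed.

Lemma Lm_comp a a' g w : Lm a (Lm a' g) w = Lm (a ++ a') g w.
Proof.
case: (prefP (a ++ a') w) => [[v ->]|N].
  by rewrite [RHS]Lm_cat -catA !Lm_cat.
rewrite (Lm_0 _ N); case: (prefP a w) => [[x Ew]|N2]; last by rewrite Lm_0.
rewrite Ew Lm_cat Lm_0 // => -[y Ey]; apply: N; exists y; by rewrite Ew Ey catA.
Qed.

Lemma Rm_comp b b' g w : Rm b (Rm b' g) w = Rm (b' ++ b) g w.
Proof.
case: (sufP (b' ++ b) w) => [[u ->]|N].
  by rewrite [RHS]Rm_cat catA !Rm_cat.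
rewrite (Rm_0 _ N); case: (sufP b w) => [[x Ew]|N2]; last by rewrite Rm_0.
rewrite Ew Rm_cat Rm_0 // => -[y Ey]; apply: N; exists y; by rewrite Ew Ey -catA.
Qed.

Lemma LR_comm a b g w : Lm a (Rm b g) w = Rm b (Lm a g) w.
Proof.
case: (prefP a w) => [[x ->]|N].
  rewrite Lm_cat; case: (sufP b x) => [[y ->]|N2].
    by rewrite Rm_cat catA Rm_cat Lm_cat.
  rewrite Rm_0 //; case: (sufP b (a ++ x)) => [[z Ez]|N3]; last by rewrite Rm_0.
  rewrite Ez Rm_cat; case: (prefP a z) => [[y Ey]|N4]; last by rewrite Lm_0.
  exfalso; apply: N2; exists y; apply: (@catK a); by rewrite Ez Ey catA.
rewrite Lm_0 //; case: (sufP b w) => [[z Ez]|N3]; last by rewrite Rm_0.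
rewrite Ez Rm_cat; case: (prefP a z) => [[y Ey]|N4]; last by rewrite Lm_0.
exfalso; apply: N; exists (y ++ b); by rewrite Ez Ey catA.
Qed.

Lemma Lm_sum a m (k : 'I_m -> R) (F : 'I_m -> ncp R T) w :
  Lm a (fun v => \sum_(i < m) k i * F i v) w = \sum_(i < m) k i * Lm a (F i) w.
Proof. rewrite /Lm; case: ifP => _ //; rewrite big1 // => i _; exact: mulr0. Qed.
Lemma Rm_sum b m (k : 'I_m -> R) (F : 'I_m -> ncp R T) w :
  Rm b (fun v => \sum_(i < m) k i * F i v) w = \sum_(i < m) k i * Rm b (F i) w.
Proof. rewrite /Rm; case: ifP => _ //; rewrite big1 // => i _; exact: mulr0. Qed.

Lemma nc_L a g w : ncmul (ncword R a) g w = Lm a g w.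
Proof.
rewrite /ncmul /ncword.
rewrite (eq_bigr (fun i : 'I_(size w).+1 =>
   if (i == size a :> nat) then Lm a g w else 0)); last first.
  move=> i _; case: (eqVneq (i : nat) (size a)) => [Hi|Hi].
    by rewrite /Lm Hi; case: ifP; rewrite ?mul1r ?mul0r.
  case: eqP => E; last by rewrite mul0r.
  by exfalso; move: Hi; rewrite -E size_takel ?eqxx // -ltnS ltn_ord.
case: (ltnP (size a) (size w).+1) => H.
  rewrite (bigD1 (Ordinal H)) //= eqxx big1 ?addr0 // => i.
  by rewrite -(inj_eq val_inj) /= => /negbTE ->.
rewrite big1 => [|i _]; last by case: eqP => // E; move: H; rewrite -E ltnNge -ltnS ltn_ord.
rewrite /Lm; case: eqP => // E.
by move: H; rewrite -E size_take_min ltnNge geq_minr.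
Qed.

Lemma nc_R b g w : ncmul g (ncword R b) w = Rm b g w.
Proof.
rewrite /ncmul /ncword.
have H : (size w - size b < (size w).+1)%N by rewrite ltnS leq_subr.
rewrite (bigD1 (Ordinal H)) //= big1 ?addr0.
  by rewrite /Rm; case: ifP; rewrite ?mulr1 ?mulr0.
move=> i; rewrite -(inj_eq val_inj) /= => Hi.
case: eqP => E; last by rewrite mulr0.
exfalso; move/negP: Hi; apply; apply/eqP.
have: size (drop i w) = size b by rewrite E.
rewrite size_drop => Hs; by rewrite -Hs subKn // -ltnS ltn_ord.
Qed.

Lemma nc_S a b g w :
  ncmul (ncmul (ncword R a) g) (ncword R b) w = Rm b (Lm a g) w.
Proof. by rewrite nc_R; apply: Rm_ext => v; rewrite nc_L. Qed.

Lemma Lm_word a v w : Lm a (ncword R v) w = ncword R (a ++ v) w.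
Proof.
rewrite /ncword; case: (prefP a w) => [[x ->]|N].
  by rewrite Lm_cat eqseq_cat // eqxx.
rewrite Lm_0 //; case: eqP => // E; exfalso; apply: N; by exists v.
Qed.
Lemma Rm_word b v w : Rm b (ncword R v) w = ncword R (v ++ b) w.
Proof.
rewrite /ncword; case: (sufP b w) => [[x ->]|N].
  rewrite Rm_cat; have ->: (x ++ b == v ++ b) = (x == v); last by [].
  apply/eqP/eqP => [E|->] //.
  have Hs: size x = size v by move/(congr1 size): E; rewrite !size_cat => /addIn.
  by move/eqP: E; rewrite eqseq_cat // => /andP[/eqP].
rewrite Rm_0 //; case: eqP => // E; exfalso; apply: N; by exists v.
Qed.

Lemma in_ideal_ext (G : ncp R T -> Prop) (f f' : ncp R T) : f =1 f' -> in_ideal G f -> in_ideal G f'.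
Proof.
move=> e [m [c [a [b [g [Hg Hf]]]]]]; exists m, c, a, b, g; split=> // w.
by rewrite -e.
Qed.

Lemma in_ideal0 (G : ncp R T -> Prop) : in_ideal G (fun _ => 0).
Proof.
exists 0%N, (fun _ => 0), (fun _ => [::]), (fun _ => [::]), (fun _ => fun _ => 0).
by split=> [[]|w]; rewrite // big_ord0.
Qed.

Lemma in_ideal_gen (G : ncp R T -> Prop) g : G g -> in_ideal G g.
Proof.
move=> Gg; exists 1%N, (fun _ => 1), (fun _ => [::]), (fun _ => [::]), (fun _ => g).
split=> // w; rewrite big_ord1 mul1r nc_S /Rm subn0 drop_size eqxx take_size.
by rewrite /Lm take0 drop0.
Qed.

Lemma in_ideal_scale (G : ncp R T -> Prop) k f : in_ideal G f -> in_ideal G (fun w => k * f w).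
Proof.
move=> [m [c [a [b [g [Hg Hf]]]]]].
exists m, (fun i => k * c i), a, b, g; split=> // w.
by rewrite Hf mulr_sumr; apply: eq_bigr => i _; rewrite mulrA.
Qed.

Lemma in_ideal_add (G : ncp R T -> Prop) f1 f2 : in_ideal G f1 -> in_ideal G f2 ->
  in_ideal G (fun w => f1 w + f2 w).
Proof.
move=> [m1 [c1 [a1 [b1 [g1 [Hg1 Hf1]]]]]] [m2 [c2 [a2 [b2 [g2 [Hg2 Hf2]]]]]].
pose sel (X : Type) (x1 : 'I_m1 -> X) (x2 : 'I_m2 -> X) (i : 'I_(m1 + m2)) :=
  match split i with inl j => x1 j | inr j => x2 j end.
have sl X x1 x2 j : @sel X x1 x2 (lshift m2 j) = x1 j.
  by rewrite /sel -[lshift _ _]/(unsplit (inl j)) unsplitK.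
have sr X x1 x2 j : @sel X x1 x2 (rshift m1 j) = x2 j.
  by rewrite /sel -[rshift _ _]/(unsplit (inr j)) unsplitK.
exists (m1 + m2)%N, (sel _ c1 c2), (sel _ a1 a2), (sel _ b1 b2), (sel _ g1 g2).
split=> [i|w]; first by rewrite /sel; case: split.
rewrite big_split_ord Hf1 Hf2; congr (_ + _); apply: eq_bigr => i _;
  by rewrite ?sl ?sr.
Qed.

Lemma in_ideal_sum (G : ncp R T -> Prop) m (k : 'I_m -> R) (F : 'I_m -> ncp R T) :
  (forall i, in_ideal G (F i)) -> in_ideal G (fun w => \sum_(i < m) k i * F i w).
Proof.
elim: m k F => [|m IH] k F HF.
  by apply: in_ideal_ext (in_ideal0 G) => w; rewrite big_ord0.
apply: in_ideal_ext; first by move=> w; rewrite big_ord_recr /=; reflexivity.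
apply: in_ideal_add; last by apply: in_ideal_scale.
exact: (IH (fun i => k (widen_ord _ i)) (fun i => F (widen_ord _ i))).
Qed.

Lemma in_ideal_sand (G : ncp R T -> Prop) x y g : in_ideal G g -> in_ideal G (Rm y (Lm x g)).
Proof.
move=> [m [c [a [b [h [Hg Hf]]]]]].
exists m, c, (fun i => x ++ a i), (fun i => b i ++ y), h; split=> // w.
rewrite (Rm_ext y (Lm_ext x Hf)).
rewrite (Rm_ext y (fun v => Lm_sum x c (fun i => ncmul (ncmul (ncword R (a i)) (h i)) (ncword R (b i))) v)).
rewrite (Rm_sum y c (fun i => Lm x (ncmul (ncmul (ncword R (a i)) (h i)) (ncword R (b i))))).
apply: eq_bigr => i _; congr (_ * _).
rewrite nc_S -Rm_comp; apply: Rm_ext => v.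
rewrite (Lm_ext x (nc_S (a i) (b i) (h i))) LR_comm.
apply: Rm_ext => u; exact: Lm_comp.
Qed.

Lemma S_word x y v w : Rm y (Lm x (ncword R v)) w = ncword R (x ++ v ++ y) w.
Proof. by rewrite (Rm_ext y (Lm_word x v)) Rm_word catA. Qed.
Lemma S_sub x y f g w :
  Rm y (Lm x (ncsub f g)) w = Rm y (Lm x f) w - Rm y (Lm x g) w.
Proof. by rewrite /Rm /Lm /ncsub; (repeat case: ifP => _); rewrite ?subr0. Qed.
Lemma S_scale x y k f w :
  Rm y (Lm x (ncscale k f)) w = k * Rm y (Lm x f) w.
Proof. by rewrite /Rm /Lm /ncscale; (repeat case: ifP => _); rewrite ?mulr0. Qed.

End Aux.

Section Main.
Variables (n : nat) (ltP : rel 'I_n).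

Definition mz (h : ncp int 'I_n) : ncp Qt 'I_n := fun w => (h w)%:~R.

Lemma map_S a b g w : ((Rm b (Lm a g) w)%:~R : Qt) = Rm b (Lm a (mz g)) w.
Proof. by rewrite /Rm /Lm /mz; (repeat case: ifP => _); rewrite ?mulr0z. Qed.

Lemma map_word (v w : seq 'I_n) : ((ncword int v w)%:~R : Qt) = ncword Qt v w.
Proof. by rewrite /ncword; case: eqP => _ /=; rewrite ?mulr1z ?mulr0z. Qed.

Lemma map_sub (v1 v2 w : seq 'I_n) :
  mz (ncsub (ncword int v1) (ncword int v2)) w = ncword Qt v1 w - ncword Qt v2 w.
Proof. by rewrite /mz /ncsub intrB !map_word. Qed.

Lemma gen_ok g : is_NUIO ltP -> plac_gens ltP g -> in_ideal (T_gens ltP) (mz g).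
Proof.
move=> [irr _ ltN nuio] [a [b [c [[Hab Hcb Hac Hg]|[Hba Hbc Hac Hg]|[Iab Ibc Hac Hg]]]]].
- pose G1 := ncsub (ncword Qt [:: c; a]) (ncword Qt [:: a; c]).
  apply: (@in_ideal_ext _ _ _ (fun w => -1 * Rm [::] (Lm [:: b] G1) w)).
    move=> w; rewrite /mz Hg -/(mz _ w) map_sub S_sub !S_word /=; ring.
  apply: in_ideal_scale; apply: in_ideal_sand; apply: in_ideal_gen.
  by left; exists a, c.
- pose G1 := ncsub (ncword Qt [:: c; a]) (ncword Qt [:: a; c]).
  apply: (@in_ideal_ext _ _ _ (fun w => Rm [:: b] (Lm [::] G1) w)).
    move=> w; rewrite /mz Hg -/(mz _ w) map_sub S_sub !S_word /=; ring.
  apply: in_ideal_sand; apply: in_ideal_gen.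
  by left; exists a, c.
- pose G1 := ncsub (ncword Qt [:: c; a]) (ncword Qt [:: a; c]).
  have G1T : T_gens ltP G1 by left; exists a, c.
  have nac : a != c by apply/eqP => E; move: Hac; rewrite E irr.
  case: (eqVneq a b) => [Eab|nab].
    apply: (@in_ideal_ext _ _ _ (fun w => Rm [:: a] (Lm [::] G1) w)).
      move=> w; rewrite /mz Hg -/(mz _ w) map_sub S_sub !S_word -Eab /=; ring.
    by apply: in_ideal_sand; apply: in_ideal_gen.
  case: (eqVneq b c) => [Ebc|nbc].
    apply: (@in_ideal_ext _ _ _ (fun w => -1 * Rm [::] (Lm [:: c] G1) w)).
      move=> w; rewrite /mz Hg -/(mz _ w) map_sub S_sub !S_word Ebc /=; ring.
    by apply: in_ideal_scale; apply: in_ideal_sand; apply: in_ideal_gen.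
  have /andP[ltab ltbc] := nuio a b c nab nbc nac Iab Ibc Hac.
  pose Gbc := ncsub (ncword Qt [:: c; b]) (ncscale tQ (ncword Qt [:: b; c])).
  pose Gab := ncsub (ncword Qt [:: b; a]) (ncscale tQ (ncword Qt [:: a; b])).
  have GbcT : T_gens ltP Gbc by right; exists b, c.
  have GabT : T_gens ltP Gab by right; exists a, b.
  apply: (@in_ideal_ext _ _ _ (fun w =>
     (Rm [:: b] (Lm [::] G1) w + Rm [::] (Lm [:: a] Gbc) w) +
     (-1 * Rm [::] (Lm [:: b] G1) w + -1 * Rm [:: c] (Lm [::] Gab) w))).
    move=> w; rewrite /mz Hg -/(mz _ w) map_sub !S_sub !S_scale !S_word /=; ring.
  by apply: in_ideal_add; apply: in_ideal_add; rewrite ?in_ideal_scale;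
    try apply: in_ideal_scale; apply: in_ideal_sand; apply: in_ideal_gen.
Qed.

End Main.

Theorem mainTheorem5 (n : nat) (ltP : rel 'I_n) (hP : is_NUIO ltP)
  (f : ncp Qt 'I_n) :
  in_Qt_tensor_plac ltP f -> in_ideal (T_gens ltP) f.
Proof.
move=> [m [c [h [Hh Hf]]]].
apply: (@in_ideal_ext _ _ _ (fun w => \sum_(i < m) c i * mz (h i) w)).
  by move=> w; rewrite Hf.
apply: in_ideal_sum => i.
case: (Hh i) => [m' [d [a [b [g [Hg He]]]]]].
apply: (@in_ideal_ext _ _ _
   (fun w => \sum_(j < m') (d j)%:~R * Rm (b j) (Lm (a j) (mz (g j))) w)).
  move=> w; rewrite /mz He (big_morph (fun x : int => (x%:~R : Qt)) (@intrD _) (mulr0z 1)).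
  by apply: eq_bigr => j _; rewrite intrM nc_S map_S.
apply: in_ideal_sum => j; apply: in_ideal_sand; apply: gen_ok => //; exact: Hg.
Qed.
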